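(* Let $X$ be a finite $T_0$ topological space and let $f,g\in \mathrm{Homeo}(X)$. Then $f$ is isotopic to $g$ if and only if $f=g$. In particular, $\mathrm{Mod}(X)=\mathrm{Homeo}(X)$.
   Context: $\mathrm{Homeo}(X)$ is the group of homeomorphisms of $X$. Two homeomorphisms $f,g$ of $X$ are isotopic if there is a continuous map $H:X\times [0,1]\to X$ such that each $H_t=H(\cdot,t)$ is a homeomorphism of $X$, $H_0=f$ and $H_1=g$. The mapping class group $\mathrm{Mod}(X)$ is the group of isotopy classes of homeomorphisms of $X$. *)

(* Defs.v *)
From HB Require Import structures.
From mathcomp Require Import all_boot all_order all_algebra.
From mathcomp Require Import all_classical all_reals all_analysis.
Set Implicit Arguments. Unset Strict Implicit. Unset Printing Implicit Defensive.
Import Order.TTheory GRing.Theory Num.Theory.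
Local Open Scope classical_set_scope.
Local Open Scope ring_scope.

Definition homeo (X : topologicalType) (f : X -> X) : Prop :=
  exists g : X -> X, [/\ cancel f g, cancel g f, continuous f & continuous g].

Definition isotopic (R : realType) (X : topologicalType) (f g : X -> X) : Prop :=
  exists H : X * R -> X,
    [/\ {within [set: X] `*` `[0%R, 1%R], continuous H},
        (forall t : R, t \in `[0%R, 1%R] -> homeo (fun x => H (x, t))),
        (forall x, H (x, 0%R) = f x) &
        (forall x, H (x, 1%R) = g x)].

(* Main.v *)
Require Import Defs.
From HB Require Import structures.
From mathcomp Require Import all_boot all_order all_algebra.
From mathcomp Require Import all_classical all_reals all_analysis.
Import Order.TTheory GRing.Theory Num.Theory.
Local Open Scope classical_set_scope.

Lemma near_fin {T : eqType} {U} (F : set_system U) {FF : Filter F} (P : T -> U -> Prop) :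
  finite_set [set: T] -> (forall x, F (P x)) -> F (fun u => forall x, P x u).
Proof.
move=> /finite_seqP[s hs] hP.
suff: F (fun u => forall x, x \in s -> P x u).
  apply: filterS => u H x; apply: H.
  by have : [set: T] x by []; rewrite hs.
elim: s {hs} => [|y s IH].
  by apply: filterE => u x.
move: (hP y) IH; apply: filterS2 => u Py Ps x.
by rewrite inE => /orP[/eqP->|/Ps].
Qed.

Lemma inj_fin_surj {T : eqType} (A : set T) (phi : T -> T) :
  finite_set A -> injective phi -> (forall y, A y -> A (phi y)) ->
  forall x, A x -> exists y, A y /\ phi y = x.
Proof.
move=> /finite_seqP[s ->] inj hA x xs.
set s' := undup s.
have u1 : uniq (map phi s') by rewrite map_inj_uniq ?undup_uniq.
have sub : {subset map phi s' <= s'}.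
  by move=> z /mapP[y]; rewrite !mem_undup => ys ->; apply: hA.
have [_ eqs] := uniq_min_size u1 sub (eq_leq (esym (size_map _ _))).
have : x \in map phi s' by rewrite eqs mem_undup.
by case/mapP=> y; rewrite mem_undup => ys ->; exists y.
Qed.

Definition sle {X : topologicalType} (y z : X) := forall O : set X, open O -> O z -> O y.

Lemma sle_refl {X : topologicalType} (y : X) : sle y y.
Proof. by move=> O. Qed.

Lemma sle_trans {X : topologicalType} (x y z : X) : sle x y -> sle y z -> sle x z.
Proof. by move=> h1 h2 O oO Oz; apply: h1 => //; apply: h2. Qed.

Lemma cont_sle {X : topologicalType} (k : X -> X) y z :
  continuous k -> sle y z -> sle (k y) (k z).
Proof.
move=> /continuousP kc h O oO Okz; exact: (h (k @^-1` O) (kc _ oO) Okz).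
Qed.

Lemma sle_anti {X : topologicalType} (XT0 : kolmogorov_space X) (y z : X) :
  sle y z -> sle z y -> y = z.
Proof.
move=> h1 h2; apply/eqP; apply: contraT => /XT0[A [[]|[]]].
- rewrite inE nbhsE => -[B [oB By] BA]; rewrite inE => nAz.
  by exfalso; apply: nAz; apply: BA; apply: h2.
- rewrite inE nbhsE => -[B [oB Bz] BA]; rewrite inE => nAy.
  by exfalso; apply: nAy; apply: BA; apply: h1.
Qed.

Lemma near_sle {X : topologicalType} (Xfin : finite_set [set: X]) (z : X) :
  \forall w \near z, sle w z.
Proof.
have := @near_fin X X (nbhs z) _ (fun y w => w = y -> sle y z) Xfin.
move=> /(_ _) H.
have H2 : \forall w \near z, forall y, w = y -> sle y z.
  apply: H => y; have [h|h] := pselect (sle y z).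
    by apply: filterE => w _.
  have [V hO] : exists V : set X, ~ (open V -> V z -> V y).
    by apply/existsNP => hh; apply: h => V; apply: hh.
  have [oO [Oz nOy]] : open V /\ (V z /\ ~ V y).
    split; first by apply: contra_notP hO => nO oO.
    split; first by apply: contra_notP hO => nO _ Oz.
    by move=> Oy; apply: hO.
  have : nbhs z V by apply: open_nbhs_nbhs.
  by apply: filterS => w Ow wy; exfalso; apply: nOy; rewrite -wy.
by apply: filterS H2 => w /(_ w erefl).
Qed.

Lemma homeo_le_eq {X : topologicalType} (Xfin : finite_set [set: X])
  (XT0 : kolmogorov_space X) (a b : X -> X) :
  homeo a -> homeo b -> (forall x, sle (a x) (b x)) -> a = b.
Proof.
move=> [a' [aK a'K ac a'c]] [b' [bK b'K bc b'c]] hle.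
pose phi := b' \o a.
have phile x : sle (phi x) x.
  by have := @cont_sle _ b' _ _ b'c (hle x); rewrite bK.
have injphi : injective phi := inj_comp (can_inj b'K) (can_inj aK).
apply: funext => x.
have fin : finite_set [set y | sle y x] by apply: sub_finite_set Xfin.
have [y [yx ey]] := @inj_fin_surj _ _ phi fin injphi
  (fun y hy => sle_trans _ _ _ (phile y) hy) _ (sle_refl x).
have xy : sle x y by rewrite -{1}ey; apply: phile.
have yx' := sle_anti XT0 _ _ yx xy.
rewrite yx' in ey.
by rewrite -[LHS]b'K; congr b.
Qed.

Theorem theorem1p2 (R : realType) (X : topologicalType)
  (Xfin : finite_set [set: X]) (XT0 : kolmogorov_space X)
  (f g : X -> X) (hf : homeo f) (hg : homeo g) :
  isotopic R f g <-> f = g.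
Proof.
split; last first.
  move=> fg; rewrite -fg; have [f' [_ _ fc _]] := hf.
  exists (fun p => f p.1); split => //.
    apply: continuous_subspaceT => p.
    apply: continuous_comp; [exact: cvg_fst | exact: fc].
move=> [H [Hc Hh H0 H1]].
set J := `[0%R, 1%R] in Hc Hh.
have Hc' := (subspace_continuousP _ _).1 Hc.
have loc : forall t, J t -> \forall s \near t, J s -> forall x, H (x, s) = H (x, t).
  move=> t It.
  have hx : forall x, \forall s \near t, J s -> sle (H (x, s)) (H (x, t)).
    move=> x.
    have := Hc' (x, t) (conj Logic.I It) _ (near_sle Xfin (H (x, t))).
    move=> hh; move: hh; rewrite nbhs_simpl /= => -[[P Q] /= [nP nQ] PQ].
    apply: filterS nQ => s Qs Js.
    apply: (PQ (x, s)); first by split => //; apply: nbhs_singleton.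
    by split.
  have hall := @near_fin X _ (nbhs t) _ (fun x s => J s -> sle (H (x, s)) (H (x, t))) Xfin hx.
  have hall2 : nbhs t (fun u => forall x, J u -> sle (H (x, u)) (H (x, t))) by apply: hall; exact: nbhs_filter.
  apply: filterS hall2 => s hs Js x.
  have e := @homeo_le_eq X Xfin XT0 (fun x => H (x, s)) (fun x => H (x, t)) (Hh s Js) (Hh t It) (fun x => hs x Js).
  exact: (congr1 (fun h => h x) e).
have Jc : connected J by apply/connected_intervalP; exact: interval_is_interval.
have J0 : J 0%R by rewrite /J /= in_itv /= lexx ler01.
have J1 : J 1%R by rewrite /J /= in_itv /= lexx ler01.
pose B := [set s | J s /\ (fun x => H (x, s)) = f].
have BJ : B = J.
  apply: Jc.
  - by exists 0%R; split => //; apply: funext => x; exact: H0.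
  - exists (interior [set u | J u -> B u]); first exact: open_interior.
    apply/seteqP; split => s.
      move=> [Js hs]; split => //.
      move: (loc s Js); apply: filterS => u hu Ju; split => //.
      by rewrite -hs; apply: funext => x; rewrite hu.
    by move=> [Js Cs]; exact: (nbhs_singleton Cs Js).
  - exists (~` interior [set u | J u -> ~ B u]).
      by apply: open_closedC; exact: open_interior.
    apply/seteqP; split => s.
      by move=> [Js hs]; split => // Cs; exact: (nbhs_singleton Cs Js).
    move=> [Js nCs]; apply: contra_notP nCs => nBs.
    move: (loc s Js); apply: filterS => u hu Ju [_ hfu]; apply: nBs; split => //.
    by rewrite -hfu; apply: funext => x; rewrite hu.
have : B 1%R by rewrite BJ.
move=> [_ e]; apply: funext => x.
by rewrite -H1 -e.
Qed.
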